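(* For every $i\in\{1,\dots,m-1\}$, every real $\varphi$ and every real $d$ (of either sign), there exist finite activation sequences (compositions of the moves $f_1(\cdot),\dots,f_m(\cdot)$ with positive arguments) realizing $h_i(\varphi)$ and $g_i(d)$, respectively.
   Context: A swarm of $n$ planar robots; robot $j$ has state $(x_j,y_j,\theta_j)$, $\theta_j$ mod $2\pi$; all robots have the same turning radius $r>0$. Groups $G_1,\dots,G_m$ with activation vectors $\alpha_i\in\{0,1\}^n$ ($\alpha_{i,j}=1$ iff robot $j\in G_i$); the patterns $(\alpha_{1,j},\dots,\alpha_{m-1,j})$ are pairwise distinct, none all zeros, none all ones; $G_m=\emptyset$. Dynamics: one group $\nu(t)$ active at a time, input $u(t)>0$; with $a_j=\alpha_{\nu(t),j}$: $\dot x_j=a_j\cos\theta_j u$, $\dot y_j=a_j\sin\theta_j u$, $\dot\theta_j=(1-a_j)u/r$. For $i<m$, $d>0$: $f_i(d)$ = activate $G_i$ with $\int u\,dt=d$ (members translate $d$ along heading, non-members rotate in place by $d/r$). For $\varphi>0$: $f_m(\varphi)$ = activate $G_m$ with $\int u\,dt=r\varphi$ (all robots rotate in place by $\varphi$). $h_i(\varphi)$: net effect in which members of $G_i$ are unchanged and non-members keep their positions with orientation increased by $\varphi$ mod $2\pi$. $g_i(d)$: net effect in which each member $j$ of $G_i$ is translated by $d(\cos\theta_j,\sin\theta_j)$ with unchanged orientation and non-members are unchanged. *)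

(* Defs.v *)
From Stdlib Require Import Reals List ZArith Lra.
Open Scope R_scope.

(* State of one robot: (x, y, theta). A configuration assigns a state to each
   robot index j (only j < n matters). *)
Record rstate := RState { rx : R; ry : R; rth : R }.
Definition config := nat -> rstate.

(* Activation pattern: alpha i j = true iff robot j belongs to group G_i. *)
Definition activation := nat -> nat -> bool.

(* Activating group i with total input  \int u dt = s  (a_j constant during the
   activation): members translate s along their (constant) heading, non-members
   rotate in place by s / r. *)
Definition flow (r : R) (alpha : activation) (i : nat) (s : R) (c : config) : config :=
  fun j => let st := c j in
    if alpha i j
    then RState (rx st + s * cos (rth st)) (ry st + s * sin (rth st)) (rth st)
    else RState (rx st) (ry st) (rth st + s / r).

(* The move f_i(a): for i < m, f_i(d) has \int u = d; f_m(phi) has \int u = r*phi. *)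
Definition move (r : R) (m : nat) (alpha : activation) (i : nat) (a : R)
  (c : config) : config :=
  if Nat.eqb i m then flow r alpha m (r * a) c else flow r alpha i a c.

Fixpoint run (r : R) (m : nat) (alpha : activation) (s : list (nat * R))
  (c : config) : config :=
  match s with
  | nil => c
  | (i, a) :: s' => run r m alpha s' (move r m alpha i a c)
  end.

Definition admissible (m : nat) (s : list (nat * R)) : Prop :=
  Forall (fun p => (1 <= fst p <= m)%nat /\ 0 < snd p) s.

Definition eq_mod2pi (a b : R) : Prop := exists k : Z, a = b + 2 * PI * IZR k.

Definition state_is (st : rstate) (x y th : R) : Prop :=
  rx st = x /\ ry st = y /\ eq_mod2pi (rth st) th.

Definition realizes_h (r : R) (n m : nat) (alpha : activation) (i : nat) (phi : R)
  (s : list (nat * R)) : Prop :=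
  forall c : config, forall j, (j < n)%nat ->
    let st := c j in
    let st' := run r m alpha s c j in
    if alpha i j then state_is st' (rx st) (ry st) (rth st)
    else state_is st' (rx st) (ry st) (rth st + phi).

Definition realizes_g (r : R) (n m : nat) (alpha : activation) (i : nat) (d : R)
  (s : list (nat * R)) : Prop :=
  forall c : config, forall j, (j < n)%nat ->
    let st := c j in
    let st' := run r m alpha s c j in
    if alpha i j
    then state_is st' (rx st + d * cos (rth st)) (ry st + d * sin (rth st)) (rth st)
    else state_is st' (rx st) (ry st) (rth st).

Definition valid_groups (n m : nat) (alpha : activation) : Prop :=
  (forall j j', (j < n)%nat -> (j' < n)%nat -> j <> j' ->
     exists k, (1 <= k <= m - 1)%nat /\ alpha k j <> alpha k j') /\
  (forall j, (j < n)%nat -> exists k, (1 <= k <= m - 1)%nat /\ alpha k j = true) /\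
  (forall j, (j < n)%nat -> exists k, (1 <= k <= m - 1)%nat /\ alpha k j = false) /\
  (forall j, alpha m j = false).

(* Main.v *)
Require Import Defs.
From Stdlib Require Import Reals List ZArith Lra Lia.
Open Scope R_scope.

Lemma run_app r m alpha s1 s2 c :
  run r m alpha (s1 ++ s2) c = run r m alpha s2 (run r m alpha s1 c).
Proof.
  revert c; induction s1 as [|[i a] s1 IH]; intro c; simpl; auto.
Qed.

Lemma exists_pos_rep (phi : R) : exists k : Z, 0 < phi + 2 * PI * IZR k.
Proof.
  exists (up (- phi / (2 * PI))).
  destruct (archimed (- phi / (2 * PI))) as [H _].
  assert (HP := PI_RGT_0).
  assert (2 * PI * IZR (up (- phi / (2 * PI))) > 2 * PI * (- phi / (2 * PI))).
  { apply Rmult_gt_compat_l; lra. }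
  replace (2 * PI * (- phi / (2 * PI))) with (- phi) in H0 by (field; lra).
  lra.
Qed.

Lemma h_real (n m : nat) (r : R) (alpha : activation)
  (hr : 0 < r) (hm : forall j, alpha m j = false) (i : nat) (hi : (1 <= i <= m - 1)%nat)
  (phi : R) : exists s, admissible m s /\ realizes_h r n m alpha i phi s.
Proof.
  destruct (exists_pos_rep phi) as [k Hk].
  set (e := r * (phi + 2 * PI * IZR k) / 2).
  assert (He : 0 < e) by (unfold e; apply Rmult_lt_0_compat; [apply Rmult_lt_0_compat; lra|lra]).
  assert (HP := PI_RGT_0).
  exists ((i, e) :: (m, PI) :: (i, e) :: (m, PI) :: nil).
  split.
  { repeat constructor; simpl; try lia; lra. }
  intros c j Hj; simpl.
  assert (Him : Nat.eqb i m = false) by (apply Nat.eqb_neq; lia).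
  unfold move; rewrite Him, Nat.eqb_refl.
  unfold flow; simpl.
  rewrite hm.
  destruct (alpha i j) eqn:E; simpl.
  - replace (r * PI / r) with PI by (field; lra). rewrite neg_cos, neg_sin.
    unfold state_is; simpl; split; [ring|split; [ring|]].
    exists 1%Z. simpl. field; lra.
  - unfold state_is; simpl; split; [ring|split; [ring|]].
    exists (k + 1)%Z. rewrite plus_IZR. simpl. unfold e. field; lra.
Qed.

Lemma eqm_trans a b c : eq_mod2pi a b -> eq_mod2pi b c -> eq_mod2pi a c.
Proof.
  intros [k1 H1] [k2 H2]. exists (k2 + k1)%Z. rewrite plus_IZR. lra.
Qed.

Theorem mainTheorem3 (n m : nat) (r : R) (alpha : activation)
  (hr : 0 < r) (hg : valid_groups n m alpha) :
  forall i : nat, (1 <= i <= m - 1)%nat ->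
  (forall phi : R, exists s : list (nat * R),
      admissible m s /\ realizes_h r n m alpha i phi s) /\
  (forall d : R, exists s : list (nat * R),
      admissible m s /\ realizes_g r n m alpha i d s).
Proof.
  destruct hg as [_ [_ [_ hm]]].
  intros i hi. split.
  - intro phi. apply h_real; auto.
  - intro d.
    assert (Him : Nat.eqb i m = false) by (apply Nat.eqb_neq; lia).
    assert (HP := PI_RGT_0).
    destruct (Rtotal_order d 0) as [Hd|[Hd|Hd]].
    + destruct (h_real n m r alpha hr hm i hi (d / r)) as [s [Hs Hh]].
      exists (((m, PI) :: (i, - d) :: (m, PI) :: nil) ++ s). split.
      { apply Forall_app; split; auto. repeat constructor; simpl; try lia; lra. }
      intros c j Hj. cbv zeta. rewrite run_app.
      set (c' := run r m alpha ((m, PI) :: (i, - d) :: (m, PI) :: nil) c).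
      specialize (Hh c' j Hj). cbv zeta in Hh.
      assert (Ec : c' j = if alpha i j then
          RState (rx (c j) + d * cos (rth (c j))) (ry (c j) + d * sin (rth (c j)))
                 (rth (c j) + PI + PI)
        else RState (rx (c j)) (ry (c j)) (rth (c j) + PI + - d / r + PI)).
      { unfold c'; simpl. unfold move; rewrite Him, Nat.eqb_refl.
        unfold flow; rewrite !hm.
        replace (r * PI / r) with PI by (field; lra).
        destruct (alpha i j); simpl; auto.
        rewrite neg_cos, neg_sin. f_equal; ring. }
      rewrite Ec in Hh.
      destruct (alpha i j) eqn:E; simpl in Hh.
      * destruct Hh as [H1 [H2 H3]].
        split; [exact H1|split; [exact H2|]].
        eapply eqm_trans; [exact H3|]. exists 1%Z. simpl. field; lra.
      * destruct Hh as [H1 [H2 H3]].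
        split; [exact H1|split; [exact H2|]].
        eapply eqm_trans; [exact H3|]. exists 1%Z. simpl. field; lra.
    + subst d. exists nil. split; [constructor|].
      intros c j Hj. simpl. destruct (alpha i j); unfold state_is;
        (split; [ring|split; [ring|exists 0%Z; simpl; ring]]).
    + destruct (h_real n m r alpha hr hm i hi (- d / r)) as [s [Hs Hh]].
      exists ((i, d) :: s). split.
      { constructor; auto. simpl; split; [lia|lra]. }
      intros c j Hj. simpl.
      specialize (Hh (move r m alpha i d c) j Hj).
      unfold move in Hh. rewrite Him in Hh.
      unfold flow in Hh; simpl in Hh.
      unfold move; rewrite Him.
      destruct (alpha i j) eqn:E; simpl in Hh.
      * exact Hh.
      * destruct Hh as [H1 [H2 H3]].
        split; [exact H1|split; [exact H2|]].
        eapply eqm_trans; [exact H3|]. exists 0%Z. simpl. field; lra.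
Qed.
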